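(* Let $G$ be a finite graph with node set $V(G)$, at least one edge, and maximal degree $\deg G=\max_{u\in V(G)}|N_G(u)|$. Let $O:\mathbb{R}^{V(G)}\times\mathbb{R}^{V(G)}\to\mathbb{R}^{V(G)}$ be a transition function that is local, i.e. for every node $u$ the component $O(o,d)_u$ depends only on $(o_w)_{w\in N_G(u)\cup\{u\}}$ and on $d_u$, and that satisfies, for constants $C_s>0$, $C_d>0$, $0<\alpha\le 1$, $$\|O(o,d)-O(o',d')\|_1\le C_s\|o-o'\|_1+C_d\|d-d'\|_1^{\alpha}\quad\text{for all }o,o',d,d'\in\mathbb{R}^{V(G)},$$ with $C_s<1/(\deg G+1)$. For $D\in\mathbb{R}^{V(G)}$ let $O(D)$ denote the steady-state observable, i.e. the unique fixed point of $O(\cdot,D)$. Let $D\in\mathbb{R}^{V(G)}$ be a (constant/mean) demand pattern, fix a node $v$ and $a>0$, and let $A\in\mathbb{R}^{V(G)}$ be the anomaly at $v$ given by $A_w=\delta_{vw}a$. Then for every node $w$, $$|O(D)_w-O(D+A)_w|\ \begin{cases}=0,& d_G(w,v)=\infty,\\[2pt] <\dfrac{C_d\,a^{\alpha}\,\big(C_s(\deg G+1)\big)^{d_G(v,w)}}{1-C_s(\deg G+1)},&\text{otherwise.}\end{cases}$$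
   Context: $N_G(u)$ is the set of neighbours of $u$ in $G$; $d_G(u,v)$ is the length of a shortest path in $G$ connecting $u$ and $v$ ($=\infty$ if no such path exists); $\delta_{vw}$ is the Kronecker delta; $\|\cdot\|_1$ is the $\ell^1$-norm. Since $C_s<1$, $O(\cdot,D)$ is a contraction, so the fixed point $O(D)$ exists and is unique. *)

(* Defs.v *)
From HB Require Import structures.
From mathcomp Require Import all_boot all_order all_algebra.
From mathcomp Require Import all_classical all_reals exp.
Set Implicit Arguments. Unset Strict Implicit. Unset Printing Implicit Defensive.
Import Order.TTheory GRing.Theory Num.Theory.
Local Open Scope ring_scope.

Definition simple_graph (T : finType) (e : rel T) : Prop :=
  symmetric e /\ irreflexive e.

Definition maxdeg (T : finType) (e : rel T) : nat :=
  (\max_(u : T) #|[set w | e u w]|)%N.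

Fixpoint reach_in (T : finType) (e : rel T) (k : nat) (u v : T) : bool :=
  if k is k'.+1 then (u == v) || [exists w, e u w && reach_in e k' w v]
  else u == v.

Definition is_dist (T : finType) (e : rel T) (u v : T) (k : nat) : Prop :=
  reach_in e k u v /\ forall j, (j < k)%N -> ~~ reach_in e j u v.

Definition dist_inf (T : finType) (e : rel T) (u v : T) : Prop :=
  forall k, ~~ reach_in e k u v.

Definition l1 (R : realType) (T : finType) (x : T -> R) : R :=
  \sum_(u : T) `|x u|.

(* Main.v *)
Require Import Defs.
From HB Require Import structures.
From mathcomp Require Import all_boot all_order all_algebra.
From mathcomp Require Import all_classical all_reals exp.
From mathcomp Require Import ring lra.
Import Order.TTheory GRing.Theory Num.Theory.
Local Open Scope ring_scope.

Lemma reach_refl (T : finType) (e : rel T) k u : reach_in e k u u.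
Proof. by case: k => [|k] /=; rewrite eqxx. Qed.

Lemma reach_snoc (T : finType) (e : rel T) j v x u :
  reach_in e j v x -> e x u -> reach_in e j.+1 v u.
Proof.
elim: j v => [|j IH] v /=.
  move=> /eqP -> hxu; apply/orP; right; apply/existsP; exists u.
  by rewrite hxu eqxx.
case/orP => [/eqP -> | /existsP [w /andP [hvw hw]]] hxu.
  apply/orP; right; apply/existsP; exists u; rewrite hxu /=.
  by rewrite eqxx.
apply/orP; right; apply/existsP; exists w; rewrite hvw /=.
exact: IH hw hxu.
Qed.

Lemma term_le_l1 (R : realType) (T : finType) (f : T -> R) u :
  `|f u| <= l1 f.
Proof.
rewrite /l1 (bigD1 u) //= lerDl; apply: sumr_ge0 => i _; exact: normr_ge0.
Qed.

Lemma nbd_sum_le (R : realType) (T : finType) (e : rel T) (g : T -> R) u M :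
  0 <= M -> (forall x, 0 <= g x) ->
  (forall x, (x == u) || e u x -> g x <= M) ->
  \sum_x (if (x == u) || e u x then g x else 0) <= (maxdeg e).+1%:R * M.
Proof.
move=> M0 g0 hg.
apply: (@le_trans _ _ (\sum_x ((if x == u then g x else 0) + (if e u x then M else 0)))).
  apply: ler_sum => x _.
  case: (eqVneq x u) => [->|hne] /=.
    have := g0 u; case: (e u u); lra.
  case hux: (e u x) => /=; last lra.
  have := hg x; rewrite hux orbT => /(_ isT); lra.
rewrite big_split /= -big_mkcond big_pred1_eq -big_mkcond sumr_const.
rewrite -addn1 natrD mulrDl mul1r addrC; apply: lerD.
  rewrite -[M *+ _]mulr_natl; apply: ler_wpM2r => //; rewrite ler_nat.
  have := @leq_bigmax _ (fun u => #|[set w | e u w]|) u.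
  by rewrite /maxdeg; apply: leq_trans; rewrite cardsE.
by apply: hg; rewrite eqxx.
Qed.
Arguments reach_snoc {T e j v x u}.
Arguments term_le_l1 {R T}.
Arguments nbd_sum_le {R T e g u M}.
Lemma dummy : True.
Proof. 

exact I.
Qed.

Theorem theorem1 (R : realType) (T : finType) (e : rel T)
    (O : (T -> R) -> (T -> R) -> (T -> R))
    (Cs Cd alpha : R) (D : T -> R) (v : T) (a : R)
    (oD oDA : T -> R) :
  simple_graph e ->
  (exists u w, e u w) ->
  (* locality *)
  (forall (u : T) (o o' d d' : T -> R),
      (forall w, (w == u) || e u w -> o w = o' w) -> d u = d' u ->
      O o d u = O o' d' u) ->
  0 < Cs -> 0 < Cd -> 0 < alpha -> alpha <= 1 ->
  (forall o o' d d' : T -> R,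
      l1 (fun u => O o d u - O o' d' u)
        <= Cs * l1 (fun u => o u - o' u)
           + Cd * powR (l1 (fun u => d u - d' u)) alpha) ->
  Cs < ((maxdeg e).+1%:R)^-1 ->
  0 < a ->
  (* oD = O(D), oDA = O(D + A): the (unique) steady states *)
  O oD D = oD ->
  O oDA (fun w => D w + (if w == v then a else 0)) = oDA ->
  forall w : T,
    (dist_inf e w v -> `|oD w - oDA w| = 0) /\
    (forall k, is_dist e v w k ->
       `|oD w - oDA w|
         < Cd * powR a alpha * (Cs * (maxdeg e).+1%:R) ^+ k
           / (1 - Cs * (maxdeg e).+1%:R)).
Proof.
move=> [esym eirr] [u0 [w0 hu0w0]] Hloc Cs0 Cd0 al0 al1 Hlip HCs a0 HfD HfA.
set Dp := (fun w => D w + (if w == v then a else 0)) in HfA.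
set d := fun u => `|oD u - oDA u|.
have d0 : forall x, 0 <= d x by move=> x; exact: normr_ge0.
set n := (maxdeg e).+1%:R : R.
have n0 : 0 < n by rewrite /n ltr0n.
have n2 : 2 <= n.
  rewrite /n ler_nat ltnS.
  have := @leq_bigmax _ (fun u => #|[set w | e u w]|) u0.
  apply: leq_trans; rewrite card_gt0; apply/set0Pn; exists w0; by rewrite inE.
set c := Cs * n.
have c1 : c < 1 by move: HCs; rewrite -div1r ltr_pdivlMr.
have Csc : Cs < c by rewrite /c; nra.
have c0 : 0 < c by rewrite /c mulr_gt0.
set X := Cd * powR a alpha.
have X0 : 0 < X by rewrite /X mulr_gt0 // powR_gt0.
set B := X / (1 - Cs).
have HB : forall x, d x <= B.
  move=> x; apply: (le_trans (term_le_l1 (fun u => oD u - oDA u) x)).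
  have := Hlip oD oDA D Dp; rewrite HfD HfA.
  have -> : l1 (fun u => D u - Dp u) = a.
    rewrite /l1 (bigD1 v) //= big1 /Dp.
      by rewrite eqxx addr0 opprD addrA subrr sub0r normrN gtr0_norm.
    by move=> i /negbTE hi; rewrite hi addr0 subrr normr0.
  rewrite -/X /B ler_pdivlMr ?subr_gt0; last lra.
  lra.
have Hlocal : forall u, d u <= Cs * \sum_x (if (x == u) || e u x then d x else 0)
                              + Cd * powR (if u == v then a else 0) alpha.
  move=> u.
  pose o2 := fun x => if (x == u) || e u x then oDA x else oD x.
  pose d2 := fun x => if x == u then Dp x else D x.
  have E : oDA u = O o2 d2 u.
    rewrite -{1}HfA; apply: Hloc => [x hx|]; first by rewrite /o2 hx.
    by rewrite /d2 eqxx.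
  have E1 : oD u = O oD D u by rewrite HfD.
  rewrite /d {1}E {1}E1.
  apply: (le_trans (term_le_l1 (fun x => O oD D x - O o2 d2 x) u)).
  apply: (le_trans (Hlip _ _ _ _)).
  apply: lerD.
    rewrite ler_pM2l // /l1; apply: ler_sum => x _; rewrite /o2.
    by case: ifP => _ //; rewrite subrr normr0.
  rewrite ler_pM2l //.
  have -> : l1 (fun x => D x - d2 x) = (if u == v then a else 0).
    rewrite /l1 (bigD1 u) //= big1 /d2.
      rewrite eqxx addr0 /Dp opprD addrA subrr sub0r normrN.
      by case: ifP => _; [rewrite gtr0_norm | rewrite normr0].
    by move=> i /negbTE hi; rewrite hi subrr normr0.
  by [].
have Hlocal' : forall u M, u != v -> 0 <= M ->
    (forall x, (x == u) || e u x -> d x <= M) -> d u <= c * M.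
  move=> u M huv M0 hM.
  apply: (le_trans (Hlocal u)).
  rewrite (negbTE huv) powR0 ?gt_eqF // mulr0 addr0 /c -mulrA ler_pM2l //.
  exact: nbd_sum_le.
split.
- move=> Hinf.
  pose S := fun u => `[< forall k, ~~ reach_in e k u v >].
  pose m := \big[Order.max/0]_(u | S u) d u.
  have m0 : 0 <= m.
    rewrite /m; apply: (big_ind (fun y : R => 0 <= y)) => //= x y hx hy; by rewrite le_max hx.
  have Hm : forall u, S u -> d u <= c * m.
    move=> u /asboolP Su.
    apply: Hlocal' => //.
      by have := Su 0%N.
    move=> x hx; apply: le_bigmax_cond; apply/asboolP => k.
    case/orP: hx => [/eqP -> | hux]; first exact: Su.
    apply/negP => hk; have := Su k.+1; rewrite /= negb_or => /andP [_].
    by move/negP; apply; apply/existsP; exists x; rewrite hux.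
  have : m <= c * m.
    by apply: bigmax_le; [rewrite mulr_ge0 // ltW | exact: Hm].
  move=> hmc.
  have mz : m <= 0 by nra.
  have : d w <= m by apply: le_bigmax_cond; apply/asboolP.
  move: (d0 w); rewrite /d; lra.
- have Hk : forall k u, (forall j, (j < k)%N -> ~~ reach_in e j v u) -> d u <= c ^+ k * B.
    elim => [|k IH] u hu; first by rewrite expr0 mul1r.
    have huv : u != v by have := hu 0%N isT; rewrite /= eq_sym.
    rewrite exprS -mulrA; apply: Hlocal' => //.
      have : 0 < 1 - Cs by lra.
      move=> h; rewrite mulr_ge0 ?exprn_ge0 ?ltW // /B divr_gt0 //.
    move=> x hx; apply: IH => j hj.
    case/orP: hx => [/eqP -> | hux]; first by apply: hu; apply: ltn_trans hj _.
    apply/negP => hr; have := hu j.+1 hj; rewrite (reach_snoc hr) //.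
    by rewrite esym.
  move=> k [_ hk].
  apply: (le_lt_trans (Hk k w hk)).
  have -> : X * c ^+ k / (1 - c) = c ^+ k * (X / (1 - c)) by rewrite mulrAC mulrC.
  rewrite ltr_pM2l ?exprn_gt0 // /B ltr_pM2l //.
  rewrite ltf_pV2 ?posrE ?subr_gt0 //; lra.
Qed.
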